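(* Fix a constant $c>0$. Then \[ \lim_{\ell\to\infty}2^{-\ell}\sum_{j=1}^{\ell}\binom{\ell}{j}\frac{1}{1-\left(1-\frac{2c}{\ell}\right)^j}=\frac{1}{1-e^{-c}}. \]
   Context: The sum is over integers $j$; the limit is over integers $\ell\to\infty$ (for $\ell>c$ all denominators are nonzero). In view of the preceding hitting-time formula, $2^\ell$ times this quantity is the expected time for the bitwise-mutation random walk with rate $c/\ell$ (equivalently, the (1+1) EA with mutation rate $c/\ell$ on the Needle function of length $\ell$) started uniformly to hit the all-ones string. *)

(* Defs.v *)
From Stdlib Require Import Reals.
From Coquelicot Require Import Coquelicot.
Open Scope R_scope.

(* For finitely many small l (l <= c) a denominator may vanish; Stdlib's
   total division assigns some value there, which does not affect the limit. *)
Definition needle_seq (c : R) (l : nat) : R :=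
  / 2 ^ l * sum_f 1 l (fun j => Binomial.C l j / (1 - (1 - 2 * c / INR l) ^ j)).

(* Main.v *)
Require Import Defs.
From Stdlib Require Import Reals Lra Lia.
From Coquelicot Require Import Coquelicot.
Open Scope R_scope.

Lemma ln_le_m1 x : 0 < x -> ln x <= x - 1.
Proof.
  intros Hx. rewrite <- (ln_exp (x - 1)). apply ln_le; auto.
  pose proof (exp_ineq1_le (x-1)). lra.
Qed.

Lemma ln_ge_m1 x : 0 < x -> 1 - / x <= ln x.
Proof.
  intros Hx. pose proof (ln_le_m1 (/ x) (Rinv_0_lt_compat _ Hx)).
  rewrite ln_Rinv in H; lra.
Qed.

Lemma lim_invn : is_lim_seq (fun n => / INR n) 0.
Proof.
  replace (Finite 0) with (Rbar_inv p_infty) by reflexivity.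
  apply is_lim_seq_inv. apply is_lim_seq_INR. discriminate.
Qed.

Lemma opp' (u : nat -> R) (l : R) : is_lim_seq u l -> is_lim_seq (fun n => - u n) (- l).
Proof. intros H. apply (is_lim_seq_opp u l) in H. exact H. Qed.

Lemma limA (u : nat -> R) (a : R) :
  eventually (fun n => 0 < u n) ->
  is_lim_seq (fun n => INR n * (1 - u n)) a ->
  is_lim_seq (fun n => u n ^ n) (exp (- a)).
Proof.
  intros Hpos Hw.
  assert (Hu : is_lim_seq u 1).
  { apply is_lim_seq_ext_loc with (fun n => 1 - (INR n * (1 - u n)) * / INR n).
    - exists 1%nat. intros n Hn. assert (INR n <> 0) by (apply not_0_INR; lia).
      field; auto.
    - replace (Finite 1) with (Finite (1 - a * 0)) by (f_equal; ring).
      apply is_lim_seq_minus'. apply is_lim_seq_const.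
      apply is_lim_seq_mult'; auto. apply lim_invn. }
  assert (Hl : is_lim_seq (fun n => INR n * ln (u n)) (- a)).
  { apply is_lim_seq_le_le_loc with (u := fun n => - (INR n * (1 - u n)) * / u n)
       (w := fun n => - (INR n * (1 - u n))).
    - destruct Hpos as [N HN]. exists N. intros n Hn. specialize (HN n Hn).
      pose proof (pos_INR n).
      pose proof (ln_le_m1 _ HN). pose proof (ln_ge_m1 _ HN).
      split.
      + replace (- (INR n * (1 - u n)) * / u n) with (INR n * (1 - / u n)) by (field; lra).
        apply Rmult_le_compat_l; lra.
      + replace (- (INR n * (1 - u n))) with (INR n * (u n - 1)) by ring.
        apply Rmult_le_compat_l; lra.
    - replace (- a) with (- a * / 1) by field.
      apply is_lim_seq_mult'. apply opp'; auto.
      apply (is_lim_seq_inv _ 1). auto. intro H; injection H; lra.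
    - apply opp'; auto. }
  apply is_lim_seq_ext_loc with (fun n => exp (INR n * ln (u n))).
  - destruct Hpos as [N HN]. exists N. intros n Hn.
    rewrite <- ln_pow; auto. rewrite exp_ln; auto. apply pow_lt; auto.
  - apply (is_lim_seq_continuous exp). apply derivable_continuous_pt, derivable_pt_exp.
    auto.
Qed.

Lemma limA1 (u : nat -> R) (a : R) :
  eventually (fun n => 0 < u n) ->
  is_lim_seq (fun n => INR n * (1 - u n)) a ->
  is_lim_seq u 1 /\ is_lim_seq (fun n => u n ^ (S n)) (exp (- a)).
Proof.
  intros Hpos Hw.
  assert (Hu : is_lim_seq u 1).
  { apply is_lim_seq_ext_loc with (fun n => 1 - (INR n * (1 - u n)) * / INR n).
    - exists 1%nat. intros n Hn. assert (INR n <> 0) by (apply not_0_INR; lia).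
      field; auto.
    - replace (Finite 1) with (Finite (1 - a * 0)) by (f_equal; ring).
      apply is_lim_seq_minus'. apply is_lim_seq_const.
      apply is_lim_seq_mult'; auto. apply lim_invn. }
  split; auto.
  replace (exp (-a)) with (1 * exp (-a)) by ring.
  apply is_lim_seq_ext with (fun n => u n * u n ^ n). intros; reflexivity.
  apply is_lim_seq_mult'; auto. apply limA; auto.
Qed.
Definition qq c (l : nat) := 1 - 2*c/INR l.
Fixpoint geom (k : nat) (x : R) : R := match k with O => 0 | S k => 1 + x * geom k x end.

Lemma geom_id k x : 1 - x ^ k = (1 - x) * geom k x.
Proof. induction k; simpl. ring. rewrite <- (Rmult_1_r x) at 1. nra. Qed.

Lemma geom_lim k (v : nat -> R) : is_lim_seq v 1 -> is_lim_seq (fun n => geom k (v n)) (INR k).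
Proof.
  intros Hv. induction k.
  - simpl. apply is_lim_seq_const.
  - replace (Finite (INR (S k))) with (Finite (1 + 1 * INR k)) by (f_equal; rewrite S_INR; ring).
    change (is_lim_seq (fun n => 1 + v n * geom k (v n)) (1 + 1 * INR k)). apply is_lim_seq_plus'. apply is_lim_seq_const. apply is_lim_seq_mult'; auto.
Qed.

Lemma ev_big c : eventually (fun l => c < INR l).
Proof. pose proof (proj2 (is_lim_seq_spec _ _) is_lim_seq_INR c). exact H. Qed.

Lemma qq_lim c : is_lim_seq (qq c) 1.
Proof.
  unfold qq. replace (Finite 1) with (Finite (1 - 2*c*0)) by (f_equal; ring).
  apply is_lim_seq_minus'. apply is_lim_seq_const.
  apply is_lim_seq_mult'. apply is_lim_seq_const. apply lim_invn.
Qed.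

Lemma exp_mul_pow c k : exp (- (c * INR k)) = exp (- c) ^ k.
Proof.
  induction k. simpl. rewrite Rmult_0_r, Ropp_0, exp_0; auto.
  rewrite S_INR. simpl pow. rewrite <- IHk, <- exp_plus. f_equal. ring.
Qed.

Lemma qq_pos c l : 0 < c -> 2 * c < INR l -> 0 < qq c l < 1.
Proof.
  intros Hc Hl. unfold qq. assert (0 < INR l) by lra.
  split.
  - assert (2 * c / INR l < 1). { apply (Rmult_lt_reg_r (INR l)); auto. field_simplify; lra. }
    lra.
  - assert (0 < 2 * c / INR l) by (apply Rdiv_lt_0_compat; lra). lra.
Qed.

Lemma ev_qq c : 0 < c -> eventually (fun l => 0 < qq c l < 1 /\ 2 * c < INR l).
Proof.
  intros Hc. destruct (ev_big (2*c)) as [N HN]. exists N. intros n Hn.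
  split; auto. apply qq_pos; auto.
Qed.

Lemma Tlim c k : 0 < c ->
  is_lim_seq (fun l => ((1 + qq c l ^ k) / 2) ^ l) (exp (- c) ^ k)
  /\ is_lim_seq (fun l => ((1 + qq c l ^ k) / 2) ^ (S l)) (exp (- c) ^ k)
  /\ is_lim_seq (fun l => ((1 + qq c l ^ k) / 2)) 1.
Proof.
  intros Hc. rewrite <- exp_mul_pow.
  assert (Hp : eventually (fun l => 0 < (1 + qq c l ^ k) / 2)).
  { destruct (ev_qq c Hc) as [N HN]. exists N. intros n Hn.
    destruct (HN n Hn) as [[H1 H2] _]. pose proof (pow_lt _ k H1). lra. }
  assert (Hw : is_lim_seq (fun l => INR l * (1 - (1 + qq c l ^ k) / 2)) (c * INR k)).
  { apply is_lim_seq_ext_loc with (fun l => c * geom k (qq c l)).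
    - destruct (ev_qq c Hc) as [N HN]. exists N. intros n Hn.
      destruct (HN n Hn) as [_ H3].
      replace (1 - (1 + qq c n ^ k) / 2) with ((1 - qq c n ^ k) / 2) by field.
      rewrite geom_id. replace (1 - qq c n) with (2 * c / INR n) by (unfold qq; ring). field. lra.
    - apply is_lim_seq_mult'. apply is_lim_seq_const. apply geom_lim, qq_lim. }
  destruct (limA1 _ _ Hp Hw) as [H1 H2].
  split; [apply limA; auto | split; auto].
Qed.

Lemma C_nonneg n k : 0 <= Binomial.C n k.
Proof.
  unfold Binomial.C. apply Rmult_le_pos. left; apply INR_fact_lt_0.
  left; apply Rinv_0_lt_compat, Rmult_lt_0_compat; apply INR_fact_lt_0.
Qed.

Lemma C_succ l j : (j <= l)%nat ->
  Binomial.C (S l) (S j) = INR (S l) / INR (S j) * Binomial.C l j.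
Proof.
  intros H. unfold Binomial.C. replace (S l - S j)%nat with (l - j)%nat by lia.
  change (Factorial.fact (S l)) with (S l * Factorial.fact l)%nat.
  change (Factorial.fact (S j)) with (S j * Factorial.fact j)%nat.
  rewrite !mult_INR. pose proof (INR_fact_neq_0 l). pose proof (INR_fact_neq_0 j).
  pose proof (INR_fact_neq_0 (l - j)). assert (INR (S j) <> 0) by (apply not_0_INR; lia).
  field. repeat split; auto.
Qed.

Lemma BIN x l : (1 <= l)%nat -> sum_f 1 l (fun j => Binomial.C l j * x ^ j) = (1 + x) ^ l - 1.
Proof.
  intros Hl. unfold sum_f. rewrite Rplus_comm, (binomial x 1 l).
  rewrite (decomp_sum _ l) by lia. rewrite C_n_0, pow_O, pow1.
  replace (Nat.pred l) with (l - 1)%nat by lia.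
  assert (forall a b : R, b = a -> 1 * 1 * 1 + a - 1 = b) as K by (intros; subst; ring).
  symmetry; apply K. apply sum_eq. intros i Hi. rewrite pow1, Nat.add_1_r. ring.
Qed.

Definition Rr c l K := / 2 ^ l * sum_f 1 l (fun j => Binomial.C l j * (qq c l ^ j) ^ K / (1 - qq c l ^ j)).
Definition Tt c l k := ((1 + qq c l ^ k) / 2) ^ l - / 2 ^ l.
Fixpoint Ss c l K := match K with O => 0 | S K => Ss c l K + Tt c l K end.

Lemma T_eq c l k : (1 <= l)%nat ->
  / 2 ^ l * sum_f 1 l (fun j => Binomial.C l j * (qq c l ^ j) ^ k) = Tt c l k.
Proof.
  intros Hl. unfold Tt.
  replace (sum_f 1 l (fun j => Binomial.C l j * (qq c l ^ j) ^ k))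
    with (sum_f 1 l (fun j => Binomial.C l j * (qq c l ^ k) ^ j)).
  2:{ unfold sum_f. apply sum_eq. intros. rewrite <- !pow_mult, Nat.mul_comm. auto. }
  rewrite BIN by auto. unfold Rdiv. rewrite Rpow_mult_distr, pow_inv. ring.
Qed.

Lemma q_pow_lt c l j : 0 < qq c l < 1 -> (1 <= j)%nat -> 0 < qq c l ^ j < 1.
Proof.
  intros H Hj. split. apply pow_lt; lra. apply pow_lt_1_compat. lra. lia.
Qed.

Lemma R_step c l K : 0 < qq c l < 1 -> (1 <= l)%nat -> Rr c l K = Tt c l K + Rr c l (S K).
Proof.
  intros Hq Hl. unfold Rr. rewrite <- (T_eq c l K Hl), <- Rmult_plus_distr_l. f_equal.
  unfold sum_f. rewrite <- sum_plus. apply sum_eq. intros i Hi.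
  pose proof (q_pow_lt c l (i + 1) Hq ltac:(lia)). change ((qq c l ^ (i+1)) ^ S K) with (qq c l ^ (i+1) * (qq c l ^ (i+1)) ^ K). field. lra.
Qed.

Lemma decomp c l K : 0 < qq c l < 1 -> (1 <= l)%nat -> needle_seq c l = Ss c l K + Rr c l K.
Proof.
  intros Hq Hl. induction K.
  - simpl. unfold Rr, needle_seq. rewrite Rplus_0_l. f_equal. unfold sum_f. apply sum_eq.
    intros. unfold qq. simpl pow at 2. unfold Rdiv. ring.
  - rewrite IHK, (R_step c l K) by auto. simpl. ring.
Qed.

Lemma R_nonneg c l K : 0 < qq c l < 1 -> 0 <= Rr c l K.
Proof.
  intros Hq. unfold Rr. apply Rmult_le_pos. left; apply Rinv_0_lt_compat, pow_lt; lra.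
  unfold sum_f. apply cond_pos_sum. intros n.
  pose proof (q_pow_lt c l (n + 1) Hq ltac:(lia)).
  apply Rdiv_le_0_compat. apply Rmult_le_pos. apply C_nonneg. apply pow_le; lra. lra.
Qed.
Lemma one_minus_pow q n : 0 <= q <= 1 -> INR (S n) * (1 - q) * q ^ n <= 1 - q ^ S n.
Proof.
  intros Hq. rewrite geom_id.
  assert (geom (S n) q >= INR (S n) * q ^ n).
  { induction n.
    - simpl. lra.
    - change (geom (S (S n)) q) with (1 + q * geom (S n) q).
      rewrite S_INR. simpl pow.
      assert (q ^ n <= 1) by (rewrite <- (pow1 n); apply pow_incr; lra).
      assert (0 <= q ^ n) by (apply pow_le; lra).
      assert (q * (q * q ^ n) <= 1) by nra.
      nra. }
  nra.
Qed.

Lemma term_bound c l M j : 0 < c -> 0 < qq c l < 1 -> (1 <= j <= l)%nat ->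
  Binomial.C l j * (qq c l ^ j) ^ S M / (1 - qq c l ^ j)
  <= / c * (Binomial.C (S l) (S j) * (qq c l ^ M) ^ j).
Proof.
  intros Hc Hq Hj. destruct j as [|n]. lia.
  set (q := qq c l). set (y := q ^ M).
  assert (Hl : 0 < INR l) by (apply lt_0_INR; lia).
  assert (H1q : 1 - q = 2 * c / INR l) by (unfold q, qq; ring).
  fold q in Hq. assert (Hq01 : 0 <= q <= 1) by lra. pose proof (one_minus_pow q n Hq01) as Hom.
  pose proof (q_pow_lt c l (S n) Hq ltac:(lia)) as Hqp. fold q in Hqp.
  assert (Hy : 0 < y) by (apply pow_lt; lra).
  assert (Hqn : 0 < q ^ n) by (apply pow_lt; lra).
  assert (Hyj : 0 < y ^ S n) by (apply pow_lt; lra).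
  rewrite C_succ by lia.
  pose proof (C_nonneg l (S n)) as HC.
  replace ((q ^ S n) ^ S M) with (q * q ^ n * y ^ S n).
  2:{ unfold y. rewrite <- !pow_mult. rewrite Rmult_assoc, <- pow_add.
      replace (S n * S M)%nat with (S (n + M * S n))%nat by lia. simpl pow. ring. }
  apply (Rmult_le_reg_r (1 - q ^ S n)). lra.
  unfold Rdiv. rewrite Rmult_assoc, Rinv_l by lra. rewrite Rmult_1_r.
  apply Rle_trans with (/ c * (INR (S l) / INR (S (S n)) * Binomial.C l (S n) * y ^ S n)
     * (INR (S n) * (1 - q) * q ^ n)).
  2:{ apply Rmult_le_compat_l; auto. apply Rmult_le_pos. left; apply Rinv_0_lt_compat; auto.
      apply Rmult_le_pos; [|lra]. apply Rmult_le_pos; auto.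
      apply Rdiv_le_0_compat; [apply pos_INR | apply lt_0_INR; lia]. }
  rewrite H1q.
  assert (Hrat : 1 <= INR (S l) / INR (S (S n)) * INR (S n) * 2 / INR l).
  { rewrite !S_INR. pose proof (pos_INR n).
    assert (INR n + 1 <= INR l) by (rewrite <- S_INR; apply le_INR; lia).
    apply (Rmult_le_reg_r (INR l * (INR n + 1 + 1))). nra.
    replace ((INR l + 1) / (INR n + 1 + 1) * (INR n + 1) * 2 / INR l * (INR l * (INR n + 1 + 1)))
      with (2 * (INR l + 1) * (INR n + 1)) by (field; lra). nra. }
  assert (INR (S (S n)) <> 0) by (apply not_0_INR; lia).
  replace (/ c * (INR (S l) / INR (S (S n)) * Binomial.C l (S n) * y ^ S n) *
     (INR (S n) * (2 * c / INR l) * q ^ n))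
   with (Binomial.C l (S n) * q ^ n * y ^ S n * (INR (S l) / INR (S (S n)) * INR (S n) * 2 / INR l))
   by (field; repeat split; lra).
  assert (0 <= Binomial.C l (S n) * q ^ n * y ^ S n) by (apply Rmult_le_pos; [apply Rmult_le_pos|]; lra).
  nra.
Qed.
Lemma sum_bound y l : 0 < y -> (1 <= l)%nat ->
  sum_f 1 l (fun j => Binomial.C (S l) (S j) * y ^ j) <= (1 + y) ^ S l / y.
Proof.
  intros Hy Hl.
  pose proof (BIN y (S l) ltac:(lia)) as HB. unfold sum_f in HB |- *.
  replace (S l - 1)%nat with l in HB by lia.
  rewrite (decomp_sum _ l) in HB by lia.
  replace (Nat.pred l) with (l - 1)%nat in HB by lia.
  assert (E : y * sum_f_R0 (fun x => Binomial.C (S l) (S (x + 1)) * y ^ (x + 1)) (l - 1)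
     = sum_f_R0 (fun i => Binomial.C (S l) (S i + 1) * y ^ (S i + 1)) (l - 1)).
  { rewrite scal_sum. apply sum_eq. intros i Hi. replace (S i + 1)%nat with (S (i + 1)) by lia. rewrite <- tech_pow_Rmult. ring. }
  pose proof (C_nonneg (S l) (0 + 1)).
  assert (0 <= y ^ (0 + 1)) by (apply pow_le; lra).
  assert (0 < (1 + y) ^ S l) by (apply pow_lt; lra).
  apply (Rmult_le_reg_l y); auto. rewrite E.
  replace (y * ((1 + y) ^ S l / y)) with ((1 + y) ^ S l) by (field; lra).
  nra.
Qed.

Lemma R_bound c l M : 0 < c -> 0 < qq c l < 1 -> (1 <= l)%nat ->
  Rr c l (S M) <= 2 / (c * qq c l ^ M) * ((1 + qq c l ^ M) / 2) ^ S l.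
Proof.
  intros Hc Hq Hl. unfold Rr.
  assert (Hy : 0 < qq c l ^ M) by (apply pow_lt; lra).
  assert (H2 : 0 < / 2 ^ l) by (apply Rinv_0_lt_compat, pow_lt; lra).
  apply Rle_trans with (/ 2 ^ l * (/ c * sum_f 1 l (fun j => Binomial.C (S l) (S j) * (qq c l ^ M) ^ j))).
  - apply Rmult_le_compat_l. lra. unfold sum_f. rewrite scal_sum. apply sum_Rle.
    intros i Hi. rewrite (Rmult_comm _ (/ c)). apply term_bound; auto. lia.
  - pose proof (sum_bound _ l Hy Hl).
    apply Rle_trans with (/ 2 ^ l * (/ c * ((1 + qq c l ^ M) ^ S l / qq c l ^ M))).
    + apply Rmult_le_compat_l. lra. apply Rmult_le_compat_l. left; apply Rinv_0_lt_compat; auto. auto.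
    + right. unfold Rdiv. rewrite Rpow_mult_distr, pow_inv. change (2 ^ S l) with (2 * 2 ^ l). field.
      repeat split; try lra; apply pow_nonzero; lra.
Qed.
Lemma inv2_lim : is_lim_seq (fun l => / 2 ^ l) 0.
Proof.
  apply is_lim_seq_ext with (fun l => (/ 2) ^ l). intros; apply pow_inv.
  apply is_lim_seq_geom. rewrite Rabs_pos_eq; lra.
Qed.

Lemma S_lim c K : 0 < c -> is_lim_seq (fun l => Ss c l K) ((1 - exp (- c) ^ K) / (1 - exp (- c))).
Proof.
  intros Hc. assert (exp (- c) < 1) by (rewrite <- exp_0; apply exp_increasing; lra).
  induction K.
  - simpl. replace (Finite ((1 - 1) / (1 - exp (- c)))) with (Finite 0) by (f_equal; field; lra).
    apply is_lim_seq_const.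
  - replace (Finite ((1 - exp (- c) ^ S K) / (1 - exp (- c))))
      with (Finite ((1 - exp (- c) ^ K) / (1 - exp (- c)) + (exp (- c) ^ K - 0)))
      by (f_equal; simpl pow; field; lra).
    change (is_lim_seq (fun l => Ss c l K + Tt c l K)
      ((1 - exp (- c) ^ K) / (1 - exp (- c)) + (exp (- c) ^ K - 0))).
    apply is_lim_seq_plus'; auto. unfold Tt. apply is_lim_seq_minus'.
    apply (Tlim c K Hc). apply inv2_lim.
Qed.

Lemma B_lim c M : 0 < c ->
  is_lim_seq (fun l => 2 / (c * qq c l ^ M) * ((1 + qq c l ^ M) / 2) ^ S l) (2 / c * exp (- c) ^ M).
Proof.
  intros Hc. destruct (Tlim c M Hc) as [_ [H1 H2]].
  assert (Hv : is_lim_seq (fun l => qq c l ^ M) 1).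
  { apply is_lim_seq_ext with (fun l => 2 * ((1 + qq c l ^ M) / 2) - 1). intros; field.
    replace (Finite 1) with (Finite (2 * 1 - 1)) by (f_equal; ring).
    apply is_lim_seq_minus'. apply is_lim_seq_mult'. apply is_lim_seq_const. auto.
    apply is_lim_seq_const. }
  apply is_lim_seq_mult'; auto.
  replace (2 / c) with (2 * / (c * 1)) by (field; lra).
  apply is_lim_seq_mult'. apply is_lim_seq_const.
  assert (Hcv : is_lim_seq (fun l => c * qq c l ^ M) (c * 1)).
  { apply is_lim_seq_mult'; auto. apply is_lim_seq_const. }
  pose proof (is_lim_seq_inv _ _ Hcv) as Hi. simpl in Hi. apply Hi.
  intro E; injection E; lra.
Qed.

Theorem mainTheorem4 (c : R) (hc : 0 < c) :
  is_lim_seq (needle_seq c) (1 / (1 - exp (- c))).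
Proof.
  set (r := exp (- c)).
  assert (Hr1 : r < 1) by (unfold r; rewrite <- exp_0; apply exp_increasing; lra).
  assert (Hr0 : 0 < r) by (unfold r; apply exp_pos).
  apply is_lim_seq_spec. intros eps.
  pose proof (proj2 (is_lim_seq_spec _ _) (is_lim_seq_geom r ltac:(rewrite Rabs_pos_eq; lra))) as Hg.
  simpl in Hg.
  assert (He1 : 0 < eps * c / 8) by (pose proof (cond_pos eps); apply Rdiv_lt_0_compat; nra).
  assert (He2 : 0 < eps * (1 - r) / 4) by (pose proof (cond_pos eps); apply Rdiv_lt_0_compat; nra).
  destruct (Hg (mkposreal _ He1)) as [N1 HN1].
  destruct (Hg (mkposreal _ He2)) as [N2 HN2].
  set (M := Nat.max N1 N2).
  specialize (HN1 M ltac:(lia)). specialize (HN2 M ltac:(lia)). simpl in HN1, HN2.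
  rewrite Rminus_0_r, Rabs_pos_eq in HN1, HN2 by (apply pow_le; lra).
  assert (HrM : 0 <= r ^ M) by (apply pow_le; lra).
  assert (HB0 : 2 / c * r ^ M < eps / 4).
  { replace (eps / 4) with (2 / c * (eps * c / 8)) by (field; lra).
    apply Rmult_lt_compat_l; auto. apply Rdiv_lt_0_compat; lra. }
  set (G := (1 - r ^ S M) / (1 - r)).
  assert (HG1 : 1 / (1 - r) - G < eps / 4).
  { unfold G. replace (1 / (1 - r) - (1 - r ^ S M) / (1 - r)) with (r * r ^ M / (1 - r)).
    2:{ simpl pow. field. lra. }
    apply (Rmult_lt_reg_r (1 - r)). lra. unfold Rdiv. rewrite Rmult_assoc, Rinv_l by lra.
    replace (eps * / 4 * (1 - r)) with (eps * (1 - r) / 4) by field. nra. }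
  assert (HG2 : G <= 1 / (1 - r)).
  { unfold G. unfold Rdiv. apply Rmult_le_compat_r. left; apply Rinv_0_lt_compat; lra.
    assert (0 <= r ^ S M) by (apply pow_le; lra). lra. }
  assert (He4 : 0 < eps / 4) by (pose proof (cond_pos eps); lra).
  pose proof (proj2 (is_lim_seq_spec _ _) (S_lim c (S M) hc) (mkposreal _ He4)) as E1.
  pose proof (proj2 (is_lim_seq_spec _ _) (B_lim c M hc) (mkposreal _ He4)) as E2.
  simpl in E1, E2. fold r in E1, E2. fold G in E1.
  pose proof (filter_and _ _ E1 (filter_and _ _ E2 (ev_qq c hc))) as E.
  eapply filter_imp; [|exact E]. intros l [A1 [A2 [Hq Hl]]].
  assert (Hl1 : (1 <= l)%nat) by (destruct l; simpl in Hl; [lra | lia]).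
  rewrite (decomp c l (S M) Hq Hl1).
  pose proof (R_nonneg c l (S M) Hq).
  pose proof (R_bound c l M hc Hq Hl1).
  apply Rabs_def2 in A1. apply Rabs_def2 in A2.
  cbn [Ss pow] in *. unfold G in *. cbn [pow] in *. apply Rabs_def1; lra.
Qed.
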